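(* Let $m>n$ be positive integers, $\lambda\in X$, $\Lambda=x(\lambda)$, and $\alpha=\epsilon_i-\delta_j$ with $i\in[n]$, $j\in[m]$. Then: (a) if $\lambda\in X_\alpha$ then $\Lambda\in\Pi_\alpha$; (b) if $\lambda\in X_{-\alpha}$ then $\Lambda\in\Pi_{-\alpha}$; (c) if $\lambda\in X_{\pm\alpha}$ then $x(t_{\pm\alpha}(\lambda))=\tau_{\pm\alpha}(\Lambda)$.
   Context: $X$ is the set of partitions $\lambda=(\lambda_1\ge\dots\ge\lambda_n\ge0)$ with $\lambda_1\le m$, drawn in an $n\times m$ rectangle with rows $\epsilon_1,\dots,\epsilon_n$ top to bottom and columns $\delta_1,\dots,\delta_m$; the diagram consists of boxes $\epsilon_i-\delta_j$ with $j\le\lambda_{n+1-i}$; $\lambda'_j=\#\{i:\lambda_i\ge j\}$. $X_\alpha$ (resp. $X_{-\alpha}$) is the set of $\lambda$ for which box $\alpha$ is an outer (resp. inner) corner; $t_\alpha$ adds, $t_{-\alpha}$ removes this box. Elements of $\mathbb Z^{n|m}$ are $(a_1,\dots,a_n|b_1,\dots,b_m)$; $x(\lambda)$ has $a_i=m(n-i)+n\lambda_{n+1-i}$, $b_j=n(j-1)+m\lambda'_j$. $\Pi_\alpha=\{a_i=b_j\}$, $\Pi_{-\alpha}=\{a_i-b_j=n-m\}$, $\tau_\alpha(\Lambda)$ adds $n$ to $a_i$ and $m$ to $b_j$, and $\tau_{-\alpha}=\tau_\alpha^{-1}$ subtracts them. *)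

(* Defs.v *)
From mathcomp Require Import all_boot all_order all_algebra.

Import GRing.Theory Num.Theory.
Local Open Scope ring_scope.

(* Conventions (0-based indices via ordinals):
   - a partition lam : {ffun 'I_n -> nat}, with  lam k = lambda_{k+1};
   - row i : 'I_n stands for epsilon_{i+1}; column j : 'I_m for delta_{j+1};
   - the box alpha = epsilon_{i+1} - delta_{j+1} is encoded by the pair (i, j). *)

Definition part (n : nat) := {ffun 'I_n -> nat}.

Definition inX (n m : nat) (lam : part n) : Prop :=
  (forall k l : 'I_n, (k <= l)%N -> (lam l <= lam k)%N) /\
  (forall k : 'I_n, (lam k <= m)%N).

(* length of row epsilon_{i+1} = lambda_{n+1-(i+1)} = lam (n-1-i) *)
Definition rowlen (n : nat) (lam : part n) (i : 'I_n) : nat := lam (rev_ord i).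

Definition in_diagram (n m : nat) (lam : part n) (i : 'I_n) (j : 'I_m) : bool :=
  (j < rowlen n lam i)%N.

(* lambda'_c = #{k : lambda_k >= c} (c is a 1-based column number) *)
Definition conjp (n : nat) (lam : part n) (c : nat) : nat :=
  #|[set k : 'I_n | (c <= lam k)%N]|.

Definition t_add (n m : nat) (i : 'I_n) (j : 'I_m) (lam : part n) : part n :=
  [ffun k => if k == rev_ord i then (lam k).+1 else lam k].
Definition t_rem (n m : nat) (i : 'I_n) (j : 'I_m) (lam : part n) : part n :=
  [ffun k => if k == rev_ord i then (lam k).-1 else lam k].

(* X_alpha : alpha is an outer corner: alpha is not in the diagram, it is the
   first empty box of its row, and adding it yields again a partition in X *)
Definition inXalpha (n m : nat) (i : 'I_n) (j : 'I_m) (lam : part n) : Prop :=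
  ~~ in_diagram n m lam i j /\ rowlen n lam i = j /\ inX n m (t_add n m i j lam).
(* X_{-alpha} : alpha is an inner corner: alpha is in the diagram, it is the
   last box of its row, and removing it yields again a partition in X *)
Definition inXmalpha (n m : nat) (i : 'I_n) (j : 'I_m) (lam : part n) : Prop :=
  in_diagram n m lam i j /\ rowlen n lam i = j.+1 /\ inX n m (t_rem n m i j lam).

Definition Zvec (n m : nat) := ({ffun 'I_n -> int} * {ffun 'I_m -> int})%type.

(* x(lambda): a_{i+1} = m(n-(i+1)) + n lambda_{n-i},
              b_{j+1} = n j + m lambda'_{j+1} *)
Definition xmap (n m : nat) (lam : part n) : Zvec n m :=
  ([ffun i : 'I_n => ((m * (n - i.+1) + n * rowlen n lam i)%N)%:Z],
   [ffun j : 'I_m => ((n * j + m * conjp n lam j.+1)%N)%:Z]).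

Definition inPi (n m : nat) (i : 'I_n) (j : 'I_m) (L : Zvec n m) : Prop :=
  L.1 i = L.2 j.
Definition inPim (n m : nat) (i : 'I_n) (j : 'I_m) (L : Zvec n m) : Prop :=
  (L.1 i - L.2 j = n%:Z - m%:Z)%R.

Definition tau_add (n m : nat) (i : 'I_n) (j : 'I_m) (L : Zvec n m) : Zvec n m :=
  ([ffun k => if k == i then (L.1 k + n%:Z)%R else L.1 k],
   [ffun l => if l == j then (L.2 l + m%:Z)%R else L.2 l]).
Definition tau_rem (n m : nat) (i : 'I_n) (j : 'I_m) (L : Zvec n m) : Zvec n m :=
  ([ffun k => if k == i then (L.1 k - n%:Z)%R else L.1 k],
   [ffun l => if l == j then (L.2 l - m%:Z)%R else L.2 l]).

(* Main.v *)
Require Import Defs.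
From mathcomp Require Import all_boot all_order all_algebra zify.

Lemma card_lt (n p : nat) : (p <= n)%N -> #|[set k : 'I_n | (k < p)%N]| = p.
Proof.
move=> hp.
have -> : [set k : 'I_n | (k < p)%N] = widen_ord hp @: [set: 'I_p].
  apply/setP => k; rewrite inE; apply/idP/imsetP.
    move=> kp; exists (Ordinal kp); rewrite ?inE //; exact: val_inj.
  by case=> x _ ->; rewrite /= ltn_ord.
rewrite card_imset ?cardsT ?card_ord //; move=> x y /= H; apply: val_inj; exact: (congr1 val H).
Qed.

Lemma conjp_eq n (lam : part n) c p : (p <= n)%N ->
  (forall k : 'I_n, (c <= lam k)%N = (k < p)%N) -> conjp n lam c = p.
Proof.
move=> hp h; rewrite /conjp -(@card_lt n p hp); apply: eq_card => k.
by rewrite !inE h.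
Qed.

Lemma ord_neq {n} {k r : 'I_n} : k != r -> (k : nat) <> r.
Proof. by move=> /eqP H E; apply: H; apply: val_inj. Qed.

Theorem lemma4p3 (n m : nat) (hn : (0 < n)%N) (hnm : (n < m)%N)
  (lam : part n) (hlam : inX n m lam) (i : 'I_n) (j : 'I_m) :
  (inXalpha n m i j lam -> inPi n m i j (xmap n m lam)) /\
  (inXmalpha n m i j lam -> inPim n m i j (xmap n m lam)) /\
  (inXalpha n m i j lam ->
     xmap n m (t_add n m i j lam) = tau_add n m i j (xmap n m lam)) /\
  (inXmalpha n m i j lam ->
     xmap n m (t_rem n m i j lam) = tau_rem n m i j (xmap n m lam)).
Proof.
set r := rev_ord i.
have hr : (r : nat) = (n - i.+1)%N by [].
have hrn : (r < n)%N := ltn_ord r.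
have mono := hlam.1.
have revE : forall k : 'I_n, (rev_ord k == r) = (k == i).
  by move=> k; rewrite (inj_eq rev_ord_inj).
have ADD : inXalpha n m i j lam ->
  [/\ lam r = j, conjp n lam j.+1 = r, conjp n (t_add n m i j lam) j.+1 = r.+1
    & forall l : 'I_m, l != j -> conjp n (t_add n m i j lam) l.+1 = conjp n lam l.+1].
  case=> _ [hrow hX].
  have hrj : lam r = j by [].
  have Fa : forall k : 'I_n, (k < r)%N -> (j.+1 <= lam k)%N.
    move=> k hk; have := hX.1 k r (ltnW hk); rewrite !ffunE eqxx.
    have -> : (k == r) = false by apply/negbTE/eqP => E; rewrite E ltnn in hk.
    by rewrite hrj.
  have Fb : forall k : 'I_n, (r <= k)%N -> (lam k <= j)%N.
    by move=> k hk; rewrite -hrj; apply: mono.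
  split => //.
  - apply: conjp_eq => [|k]; first exact: ltnW.
    case: (ltnP k r) => hk; first by rewrite Fa.
    by have := Fb k hk; lia.
  - apply: conjp_eq => // k; rewrite ffunE.
    case: (eqVneq k r) => [->|nkr]; first by rewrite hrj leqnn ltnSn.
    have := ord_neq nkr => nkr'.
    case: (ltnP k r) => hk; first by have := Fa k hk; lia.
    by have := Fb k hk; lia.
  - move=> l /ord_neq nlj; rewrite /conjp; apply: eq_card => k; rewrite !inE ffunE.
    case: (eqVneq k r) => [->|//]; rewrite hrj; lia.
have REM : inXmalpha n m i j lam ->
  [/\ lam r = j.+1, conjp n lam j.+1 = r.+1, conjp n (t_rem n m i j lam) j.+1 = r
    & forall l : 'I_m, l != j -> conjp n (t_rem n m i j lam) l.+1 = conjp n lam l.+1].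
  case=> _ [hrow hX].
  have hrj : lam r = j.+1 by [].
  have Fa : forall k : 'I_n, (k <= r)%N -> (j.+1 <= lam k)%N.
    by move=> k hk; rewrite -hrj; apply: mono.
  have Fb : forall k : 'I_n, (r < k)%N -> (lam k <= j)%N.
    move=> k hk; have := hX.1 r k (ltnW hk); rewrite !ffunE eqxx.
    have -> : (k == r) = false by apply/negbTE/eqP => E; rewrite E ltnn in hk.
    by rewrite hrj.
  split => //.
  - apply: conjp_eq => // k.
    case: (leqP k r) => hk; first by rewrite Fa //; lia.
    by have := Fb k hk; lia.
  - apply: conjp_eq => [|k]; first exact: ltnW.
    rewrite ffunE.
    case: (eqVneq k r) => [->|nkr]; first by rewrite hrj /= ?ltnn.
    have := ord_neq nkr => nkr'.
    case: (ltnP r k) => hk; first by have := Fb k hk; lia.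
    by have := Fa k hk; lia.
  - move=> l /ord_neq nlj; rewrite /conjp; apply: eq_card => k; rewrite !inE ffunE.
    case: (eqVneq k r) => [->|//]; rewrite hrj /=; lia.
split; [|split; [|split]].
- move=> /ADD [h1 h2 _ _]; rewrite /inPi /xmap /= !ffunE /rowlen -/r h1 h2; lia.
- move=> /REM [h1 h2 _ _]; rewrite /inPim /xmap /= !ffunE /rowlen -/r h1 h2; lia.
- move=> /ADD [h1 h2 h3 h4]; rewrite /xmap /tau_add /=; congr pair; apply/ffunP => k;
    rewrite !ffunE.
  + rewrite /rowlen !ffunE revE; case: (eqVneq k i) => [->|_] //.
    rewrite -/r h1; lia.
  + case: (eqVneq k j) => [->|nkj]; first by rewrite h2 h3; lia.
    by rewrite h4.
- move=> /REM [h1 h2 h3 h4]; rewrite /xmap /tau_rem /=; congr pair; apply/ffunP => k;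
    rewrite !ffunE.
  + rewrite /rowlen !ffunE revE; case: (eqVneq k i) => [->|_] //.
    rewrite -/r h1; lia.
  + case: (eqVneq k j) => [->|nkj]; first by rewrite h2 h3; lia.
    by rewrite h4.
Qed.
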